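(* Let $A\subset\mathcal X$ be nonempty and $x\notin A$. For a path $\omega$: $\omega\in\Omega^{\rm opt}_{x,A}$ if and only if $\omega\in\Omega_{x,A}$ and every state of $\omega$ belongs to $C^+_A(x)$.
   Context: Setting: $\mathcal X$ finite, $H:\mathcal X\to\mathbb R$ non-constant, $q$ a stochastic, symmetric, irreducible matrix on $\mathcal X$. A path is a finite sequence $\omega=(\omega_1,\dots,\omega_n)$ with $q(\omega_i,\omega_{i+1})>0$ ($n=1$ allowed). $\Phi_\omega=\max_iH(\omega_i)$, $\Phi(x,y)=\min$ of $\Phi_\omega$ over paths from $x$ to $y$, $\Phi(B,D)=\min_{x\in B,y\in D}\Phi(x,y)$. $\Omega_{x,A}$ = paths from $x$ ending in $A$ and not visiting $A$ before their last state; $\Omega^{\rm opt}_{x,A}=\{\omega\in\Omega_{x,A}:\Phi_\omega=\Phi(x,A)\}$. Connected set: at least two elements, any two joined by a path inside it. $\partial B=\{y\notin B:\exists x\in B,q(x,y)>0\}$. A cycle is a nonempty $C$ that is a singleton or connected with $\max_CH<\min_{\partial C}H$. Initial cycle $C_A(x)=\{x\}\cup\{z:\Phi(x,z)<\Phi(x,A)\}$. Relevant cycle $C^+_A(x)$: the minimal (for inclusion) cycle $C$ with $C_A(x)\subsetneq C$ (cycles containing $x$ are totally ordered by inclusion). Convention: $A$ contains every $y$ such that every path from $x$ to $y$ meets $A$. *)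

(* Defs.v *)
From HB Require Import structures.
From mathcomp Require Import all_boot all_order all_algebra.
From mathcomp Require Import boolp.
Set Implicit Arguments. Unset Strict Implicit. Unset Printing Implicit Defensive.
Import Order.TTheory GRing.Theory Num.Theory.
Local Open Scope ring_scope.

Section Landscape.
Variables (R : realDomainType) (X : finType) (H : X -> R) (q : X -> X -> R).

Definition stochastic : Prop :=
  (forall x y, 0 <= q x y) /\ (forall x, \sum_(y : X) q x y = 1).
Definition symmetric_mx : Prop := forall x y, q x y = q y x.

Definition qrel : rel X := fun a b => 0 < q a b.

Definition is_path (w : seq X) : bool :=
  if w is a :: r then path qrel a r else false.

Definition path_from_to (x y : X) (w : seq X) : Prop :=
  [/\ is_path w, head x w = x & last x w = y].

(* irreducibility: every state leads to every state (q^n(x,y) > 0 for some n) *)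
Definition irreducible_mx : Prop :=
  forall x y, exists w, path_from_to x y w.

Definition Phi_w (w : seq X) : R :=
  if w is a :: r then \big[Num.max/H a]_(z <- r) H z else 0.

Definition Htop : R := \big[Num.max/0]_(z : X) H z.

(* Phi(x,y) = min of Phi_w over paths w from x to y. Since every Phi_w is a
   value H z, this is the minimum over the (finite) set of attained values. *)
Definition Phi (x y : X) : R :=
  \big[Num.min/Htop]_(z : X | `[< exists w, path_from_to x y w /\ Phi_w w = H z >])
     H z.

Definition PhiS (B D : {set X}) : R :=
  \big[Num.min/Htop]_(x in B) \big[Num.min/Htop]_(y in D) Phi x y.

(* Omega_{x,A}: paths from x ending in A, not visiting A before their last state *)
Definition Omega (x : X) (A : {set X}) (w : seq X) : Prop :=
  [/\ is_path w, head x w = x, last x w \in A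
    & all (fun z => z \notin A) (belast x (behead w))].

Definition Omega_opt (x : X) (A : {set X}) (w : seq X) : Prop :=
  Omega x A w /\ Phi_w w = PhiS [set x] A.

Definition connected_set (C : {set X}) : Prop :=
  (1 < #|C|)%N /\
  forall a b, a \in C -> b \in C ->
    exists w, path_from_to a b w /\ all (fun z => z \in C) w.

Definition bd (B : {set X}) : {set X} :=
  [set y | (y \notin B) && [exists z in B, qrel z y]].

Definition is_cycle (C : {set X}) : Prop :=
  C != set0 /\
  ((#|C| = 1)%N \/
   (connected_set C /\ forall a b, a \in C -> b \in bd C -> H a < H b)).

Definition init_cycle (A : {set X}) (x : X) : {set X} :=
  [set z | (z == x) || (Phi x z < PhiS [set x] A)].

Definition is_relevant_cycle (A : {set X}) (x : X) (C : {set X}) : Prop :=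
  [/\ is_cycle C, init_cycle A x \proper C
    & forall C', is_cycle C' -> init_cycle A x \proper C' -> C \subset C'].

Definition A_convention (x : X) (A : {set X}) : Prop :=
  forall y, (forall w, path_from_to x y w -> has (fun z => z \in A) w) -> y \in A.

End Landscape.

(* Main.v *)
Require Import Defs.
From HB Require Import structures.
From mathcomp Require Import all_boot all_order all_algebra.
From mathcomp Require Import boolp.
Import Order.TTheory GRing.Theory Num.Theory.
Local Open Scope ring_scope.

Set Implicit Arguments. Unset Strict Implicit.
Section Aux.
Variables (R : realDomainType) (X : finType) (H : X -> R) (q : X -> X -> R).

Lemma Phiw_le a r c :
  (Phi_w H (a :: r) <= c) = all (fun z => H z <= c) (a :: r).
Proof.
rewrite /=; elim: r => [|b r IH]; first by rewrite big_nil andbT.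
rewrite big_cons ge_max IH /=.
by case: (H a <= c); case: (H b <= c); case: (all _ r).
Qed.

Lemma Phiw_in a r : exists2 z, z \in a :: r & Phi_w H (a :: r) = H z.
Proof.
rewrite /=; elim: r => [|b r [z zin IH]]; first by exists a; rewrite ?big_nil ?inE.
rewrite big_cons IH.
rewrite /Order.max; case: ifP => _.
  by exists z; rewrite // !inE in zin *; case/orP: zin => ->; rewrite ?orbT.
by exists b; rewrite // !inE eqxx orbT.
Qed.

Lemma Phiw_ge w z : z \in w -> H z <= Phi_w H w.
Proof.
case: w => // a r zin.
have : Phi_w H (a :: r) <= Phi_w H (a :: r) by [].
by rewrite Phiw_le => /allP; apply.
Qed.

Lemma Phiw_lt a r c : all (fun z => H z < c) (a :: r) -> Phi_w H (a :: r) < c.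
Proof. by case: (Phiw_in a r) => z zin -> /allP; apply. Qed.

Lemma Phiw_sub a r w : {subset a :: r <= w} -> Phi_w H (a :: r) <= Phi_w H w.
Proof. by move=> sub; rewrite Phiw_le; apply/allP => z /sub; apply: Phiw_ge. Qed.

Lemma H_le_Htop z : H z <= Htop H.
Proof. exact: le_bigmax. Qed.

Lemma Phi_le x y w : path_from_to q x y w -> Phi H q x y <= Phi_w H w.
Proof.
case: w => [[]//|a r] Hp.
case: (Phiw_in a r) => z zin e; rewrite e.
apply: bigmin_le_cond; apply/asboolP; by exists (a :: r).
Qed.

Lemma Phi_le_Htop x y : Phi H q x y <= Htop H.
Proof. exact: bigmin_le_id. Qed.

Hypothesis Hirr : irreducible_mx q.

Lemma Phi_att x y : exists w, path_from_to q x y w /\ Phi_w H w = Phi H q x y.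
Proof.
case: (Hirr x y) => w0 Hw0.
have nz : w0 != [::] by case: w0 Hw0 => [[]|].
case: w0 Hw0 nz => [//|a r] Hw0 _.
case: (Phiw_in a r) => z0 _ e0.
have P0 : `[< exists w, path_from_to q x y w /\ Phi_w H w = H z0 >].
  by apply/asboolP; exists (a :: r).
case: (eq_bigmin z0 (fun z => `[< exists w, path_from_to q x y w /\ Phi_w H w = H z >]) H P0 (fun i _ => H_le_Htop i)) => i0.
move=> /asboolP [w [Hw Hwe]] e.
by exists w; split => //; rewrite /Phi e.
Qed.

Lemma H_le_Phi x z : H z <= Phi H q x z.
Proof.
case: (Phi_att x z) => [[|a r] [[Hp hd lst] <-]]; first by [].

apply: Phiw_ge; rewrite -lst /=; exact: mem_last.
Qed.

Lemma PhiS1 x (A : {set X}) : PhiS H q [set x] A = \big[Num.min/Htop H]_(y in A) Phi H q x y.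
Proof. by rewrite /PhiS big_set1E; apply/min_idPl; apply: bigmin_le_id. Qed.

Lemma PhiS_le x (A : {set X}) y : y \in A -> PhiS H q [set x] A <= Phi H q x y.
Proof. by move=> yA; rewrite PhiS1; apply: bigmin_le_cond. Qed.

Lemma PhiS_att x (A : {set X}) : A != set0 -> exists2 y, y \in A & PhiS H q [set x] A = Phi H q x y.
Proof.
case/set0Pn => y0 y0A; rewrite PhiS1.
case: (eq_bigmin y0 (fun y => y \in A) (fun y => Phi H q x y) y0A (fun i _ => Phi_le_Htop x i)) => y yA e.
by exists y.
Qed.


Lemma prefix x y w z : path_from_to q x y w -> z \in w ->
  exists w', path_from_to q x z w' /\ Phi_w H w' <= Phi_w H w.
Proof.
case: w => [[]//|a r] [Hp ha _]; simpl in ha; subst a.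
rewrite inE => /orP [/eqP -> | zr].
  exists [:: x]; split; first by split.
  by apply: Phiw_sub => u; rewrite mem_seq1 => /eqP ->; exact: mem_head.
case/path.splitP: zr Hp => p1 p2 Hp.
exists (x :: rcons p1 z); split.
  split => //=; last by rewrite last_rcons.
  by move: Hp => /=; rewrite cat_path => /andP[].
apply: Phiw_sub => u; rewrite !inE mem_cat; case/orP => ->; rewrite ?orbT //.
Qed.

Lemma extend x z b w : path_from_to q x z w -> qrel q z b ->
  path_from_to q x b (rcons w b) /\ Phi_w H (rcons w b) <= Num.max (Phi_w H w) (H b).
Proof.
case: w => [[]//|a r] [Hp ha hl]; simpl in ha, hl, Hp => zb.
change (rcons (a :: r) b) with (a :: rcons r b).
split.
  split => //=; last by rewrite last_rcons.
  by rewrite rcons_path Hp hl.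
rewrite Phiw_le; apply/allP => u; rewrite -rcons_cons mem_rcons inE => /orP [/eqP->|uin].
  by rewrite le_max lexx orbT.
by rewrite le_max (@Phiw_ge _ _ uin).
Qed.

Hypothesis Hsym : symmetric_mx q.

Lemma reverse x a w (S : pred X) : path_from_to q x a w -> all S w ->
  path_from_to q a x (rev w) /\ all S (rev w).
Proof.
case: w => [[]//|c r] [Hp hc hl]; simpl in Hp, hc, hl; subst c => HS.
split; last by rewrite all_rev.
split.
- rewrite lastI rev_rcons /= rev_path.
  rewrite (@eq_path _ _ (qrel q)) // => u v; by rewrite /qrel Hsym.
- by rewrite lastI rev_rcons /= hl.
- by rewrite rev_cons last_rcons.
Qed.

Lemma concat a x b p1 p2 (S : pred X) : path_from_to q a x p1 -> path_from_to q x b p2 ->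
  all S p1 -> all S p2 -> path_from_to q a b (p1 ++ behead p2) /\ all S (p1 ++ behead p2).
Proof.
case: p1 => [[]//|a1 s1] [Hp1 h1 l1]; case: p2 => [[]//|c r2] [Hp2 h2 l2].
simpl in *; subst a1 c => A1 /andP [_ A2].
split; last by move: A1 => /andP [-> A1]; rewrite all_cat A1 A2.
split => //=.
  by rewrite cat_path Hp1 l1 Hp2.
by rewrite last_cat l1 l2.
Qed.

Lemma exit (C : {set X}) c r : path (qrel q) c r -> c \in C -> last c r \notin C ->
  exists a b, [/\ a \in C, b \notin C, qrel q a b & b \in r].
Proof.
elim: r c => [|d r IH] c /=; first by move=> _ ->.
case/andP => cd pr cC lC; case: (boolP (d \in C)) => dC.
  case: (IH d pr dC lC) => a [b [aC bC ab br]]; exists a, b; split => //.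
  by rewrite inE br orbT.
by exists c, d; split => //; rewrite inE eqxx.
Qed.


Lemma main (A : {set X}) x Cp w : A != set0 -> x \notin A ->
  is_relevant_cycle H q A x Cp ->
  (Omega_opt H q x A w <-> Omega q x A w /\ all (fun z => z \in Cp) w).
Proof.
move=> HA HxA HCp.
have [y0 y0A Py0] := PhiS_att x HA.
set Ps := PhiS H q [set x] A.
have {}Py0 : Ps = Phi H q x y0 := Py0.
set D := [set z | Phi H q x z <= Ps].
have DE : forall z, (z \in D) = (Phi H q x z <= Ps) by move=> z; rewrite inE.
have goodD : forall y w', path_from_to q x y w' -> Phi_w H w' <= Ps -> all (fun z => z \in D) w'.
  move=> y w' Hw' Hle; apply/allP => z zin; rewrite DE.
  case: (prefix Hw' zin) => w'' [Hw'' le''].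
  exact: le_trans (Phi_le Hw'') (le_trans le'' Hle).
have HxPs : H x <= Ps.
  case: (Phi_att x y0) => [[|a r] [Hw0 e0]]; first by case: Hw0.
  rewrite Py0 -e0; apply: Phiw_ge; case: Hw0 => _ /= -> _; exact: mem_head.
have xD : x \in D.
  rewrite DE; apply: le_trans HxPs.
  apply: le_trans (Phi_le (x:=x) (y:=x) (w:=[:: x]) _) _; first by split.
  by rewrite /= big_nil.
have y0D : y0 \in D by rewrite DE Py0.
have y0x : y0 != x by apply: contraNneq HxA => <-.
have cycD : is_cycle H q D.
  split; first by apply/set0Pn; exists x.
  right; split; first split.
  - have : [set x; y0] \subset D.
      by apply/subsetP => u /set2P [] ->.
    by move/subset_leq_card; rewrite cards2 eq_sym y0x.
  - move=> a b aD bD.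
    have [wa [Hwa ea]] := Phi_att x a; have [wb [Hwb eb]] := Phi_att x b.
    have Aa : all (fun z => z \in D) wa by apply: (goodD a wa Hwa); rewrite ea -DE.
    have Ab : all (fun z => z \in D) wb by apply: (goodD b wb Hwb); rewrite eb -DE.
    case: (reverse Hwa Aa) => Hra Ara.
    case: (concat Hra Hwb Ara Ab) => Hc Ac.
    by exists (rev wa ++ behead wb); split.
  - move=> a b aD; rewrite inE => /andP [bnD /existsP [z /andP [zD zb]]].
    apply: le_lt_trans (H_le_Phi x a) _.
    rewrite DE in aD; apply: le_lt_trans aD _.
    rewrite ltNge; apply: contra bnD => hb; rewrite DE.
    have [wz [Hwz ez]] := Phi_att x z.
    case: (extend Hwz zb) => Hwb Hle.
    apply: le_trans (Phi_le Hwb) _; apply: le_trans Hle _.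
    by rewrite ge_max ez hb andbT -DE.
have propD : init_cycle H q A x \proper D.
  apply/properP; split.
    apply/subsetP => z; rewrite DE inE => /orP [/eqP -> | h]; first by rewrite -DE.
    exact: ltW.
  exists y0 => //; rewrite inE negb_or y0x /= -leNgt; exact: PhiS_le.
have subC : forall C, is_cycle H q C -> init_cycle H q A x \proper C -> D \subset C.
  move=> C [Cne Ccase] /properP [subI [u uC uI]].
  have xC : x \in C by apply: (subsetP subI); rewrite inE eqxx.
  rewrite inE negb_or in uI; case/andP: uI => ux uI.
  case: Ccase => [C1 | [[_ Cconn] Cbd]].
    have : [set x; u] \subset C.
      by apply/subsetP => v /set2P [] ->.
    by move/subset_leq_card; rewrite cards2 eq_sym ux C1.
  apply/subsetP => z; rewrite DE => zD; apply/negPn/negP => zC.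
  have [[|a r] [Hwz ez]] := Phi_att x z; first by case: Hwz.
  case: Hwz => Hp ha hl; simpl in Hp, ha, hl; subst a.
  have lC : last x r \notin C by rewrite hl.
  have [a' [b [a'C bC ab br]]] := exit Hp xC lC.
  have bbd : b \in bd q C by rewrite inE bC; apply/existsP; exists a'; rewrite a'C.
  have Hb : H b <= Ps.
    apply: le_trans (@Phiw_ge (x :: r) b _) _; first by rewrite inE br orbT.
    by rewrite ez.
  case: (Cconn x u xC uC) => [[|c s] [Hwu allu]]; first by case: Hwu.
  move: uI; apply/negP; rewrite negbK.
  apply: le_lt_trans (Phi_le Hwu) _.
  apply: Phiw_lt; apply/allP => v vin.
  exact: lt_le_trans (Cbd v b (allP allu v vin) bbd) Hb.
have [CpCyc CpProp CpMin] := HCp.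
have CpD : Cp \subset D := CpMin D cycD propD.
have DCp : D \subset Cp := subC Cp CpCyc CpProp.
split.
- case=> Om e; split => //.
  apply/allP => z zin; apply: (subsetP DCp); move: z zin; apply/allP.
  case: Om => Hp hd lst _.
  by apply: (@goodD (last x w)) => //; rewrite e.
- case=> Om Hall; split => //.
  apply/le_anti/andP; split.
    case: Om => Hp _ _ _; case: w Hp Hall => [//|a r] _ Hall.
    rewrite Phiw_le; apply/allP => z zin.
    have := subsetP CpD z (allP Hall z zin); rewrite DE.
    exact: le_trans (H_le_Phi x z).
  case: Om => Hp hd lst _.
  apply: le_trans (PhiS_le x lst) (Phi_le (_ : path_from_to q x (last x w) w)).
  by split.
Qed.

End Aux.
Unset Implicit Arguments.
Set Strict Implicit.

Theorem lemma3p8 (R : realDomainType) (X : finType) (H : X -> R) (q : X -> X -> R)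
  (Hnc : exists a b, H a != H b)
  (Hsto : stochastic q) (Hsym : symmetric_mx q) (Hirr : irreducible_mx q)
  (A : {set X}) (x : X) (HA : A != set0) (HxA : x \notin A)
  (Hconv : A_convention q x A)
  (Cp : {set X}) (HCp : is_relevant_cycle H q A x Cp)
  (w : seq X) :
  Omega_opt H q x A w <-> (Omega q x A w /\ all (fun z => z \in Cp) w).
Proof. exact: (main Hirr Hsym w HA HxA HCp). Qed.
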